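(* Consider a D2D caching network with $K$ users each of cache size $M$ files, of which $S$ are selfish, a library of $N$ files, and $\frac{M(K-S)}{N}>1$, using the random caching scheme described in the context. Then every request vector $(\mathsf{r}_1,\dots,\mathsf{r}_K)$ is recoverable by the users if all library files are encoded with an MDS code of rate $r$, where $r\in(0,1)$ is a real positive root of the polynomial $$\sum_{i=0}^{K-S-1}\binom{K-S}{i}\Big(-\frac{M}{N}\Big)^{K-S-i}r^{K-S-1-i}+1 .$$
   Context: Selfish users cache content like all other users but never transmit; all users receive all transmissions. Random caching scheme: each of the $N$ library files of $B$ bits is divided into $I$ subfiles of $B/I$ bits, each regarded as a symbol of $\mathbb{F}_{2^{B/I}}$, and each file is encoded with an $(I, I/r)$ MDS code over $\mathbb{F}_{2^{B/I}}$ (codeword length $I/r$; any $I$ encoded symbols recover the file). Each user independently, for each file, selects uniformly at random $MI/N$ of the $I/r$ encoded-symbol indices and caches those symbols, so a given encoded symbol is cached by a given user with probability $Mr/N$. At the end of the delivery phase each user knows every encoded symbol of its requested file that is cached by itself or by at least one non-selfish user; the number of encoded symbols of a file cached exclusively by a given set $\mathcal{P}$ of users is taken to be its typical value $(\frac{Mr}{N})^{|\mathcal{P}|}(1-\frac{Mr}{N})^{K-|\mathcal{P}|}\frac{I}{r}$ (law of large numbers, large $I$). A file is recoverable by a user if the user knows at least $I$ of its encoded symbols. *)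

(* Defs.v *)
From HB Require Import structures.
From mathcomp Require Import all_boot all_order all_algebra.
Set Implicit Arguments. Unset Strict Implicit. Unset Printing Implicit Defensive.
Import Order.TTheory GRing.Theory Num.Theory.
Local Open Scope ring_scope.

(* Users are 'I_K, files are 'I_N, Sset is the set of selfish users.
   Each file is split into I subfiles and encoded into I/r symbols; a given
   symbol is cached by a given user with probability p = M r / N. *)

(* Typical number of encoded symbols of a file cached exclusively by a given
   set of users of cardinality n:  p^n (1-p)^(K-n) * I/r. *)
Definition typical_count (R : realFieldType) (K I : nat) (p r : R) (n : nat) : R :=
  p ^+ n * (1 - p) ^+ (K - n) * (I%:R / r).

(* Number of encoded symbols of file f known by user k at the end of the
   delivery phase: those cached by k itself or by at least one non-selfish
   user, i.e. the sum over all user sets P containing k or containing a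
   non-selfish user of the typical exclusive count. *)
Definition known_symbols (R : realFieldType) (K N I : nat) (Sset : {set 'I_K})
    (M r : R) (k : 'I_K) (f : 'I_N) : R :=
  \sum_(P : {set 'I_K} | (k \in P) || [exists j in P, j \notin Sset])
     @typical_count R K I (M * r / N%:R) r #|P|.

Definition recoverable (R : realFieldType) (K N I : nat) (Sset : {set 'I_K})
    (M r : R) (f : 'I_N) (k : 'I_K) : Prop :=
  I%:R <= @known_symbols R K N I Sset M r k f.

Definition request_recoverable (R : realFieldType) (K N I : nat)
    (Sset : {set 'I_K}) (M r : R) (req : 'I_K -> 'I_N) : Prop :=
  forall k : 'I_K, @recoverable R K N I Sset M r (req k) k.

Definition rate_poly (R : realFieldType) (K S N : nat) (M r : R) : R :=
  \sum_(i < K - S) ('C(K - S, i))%:R * (- (M / N%:R)) ^+ (K - S - i)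
       * r ^+ (K - S - 1 - i) + 1.

(* Main.v *)
Require Import Defs.
From HB Require Import structures.
From mathcomp Require Import all_boot all_order all_algebra.
From mathcomp Require Import zify lra.
Import Order.TTheory GRing.Theory Num.Theory.
Local Open Scope ring_scope.

Section Helpers.
Variables (R : realFieldType) (K : nat).

Lemma prod_if (p q : R) (J : {set 'I_K}) :
  \prod_i (if i \in J then p else q) = p ^+ #|J| * q ^+ (K - #|J|)%N.
Proof.
rewrite (bigID (mem J)) /=.
rewrite [X in X * _](eq_bigr (fun=> p)); last by move=> i ->.
rewrite [X in _ * X](eq_bigr (fun=> q)); last by move=> i Hi; rewrite (negbTE Hi).
rewrite !prodr_const; congr (_ * _ ^+ _).
have := cardC (mem J); rewrite card_ord => HK.
apply: (@addnI #|J|); rewrite subnKC; first exact: HK.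
by move: HK => /eqP; rewrite eq_sym => /eqP HK'; rewrite [leqRHS]HK' leq_addr.
Qed.

Lemma sum_sub (p q : R) (A : {set 'I_K}) :
  \sum_(P : {set 'I_K} | P \subset A) p ^+ #|P| * q ^+ (K - #|P|)%N
  = (p + q) ^+ #|A| * q ^+ (K - #|A|)%N.
Proof.
pose F i := if i \in A then p else 0.
have E := @bigA_distr R 0 1 *%R +%R _ F (fun=> q).
have E2 : \prod_i (F i + q) = \prod_i (if i \in A then p + q else q).
  by apply: eq_bigr => i _; rewrite /F; case: (i \in A); rewrite ?add0r.
rewrite E2 prod_if in E; rewrite E.
rewrite [RHS](bigID (fun P : {set 'I_K} => P \subset A)) /=.
rewrite [X in _ = _ + X]big1 ?addr0.
  apply: eq_bigr => P sPA; rewrite -prod_if; apply: eq_bigr => i _.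
  rewrite /F; case: ifP => // iP; by rewrite (subsetP sPA).
move=> P nsPA; have [i iP iA] : exists2 i, i \in P & i \notin A.
  exact/subsetPn.
rewrite (bigD1 i) //= iP /F (negbTE iA) mul0r //.
Qed.

End Helpers.

Theorem theorem3 (R : realFieldType) (K S N I : nat) (M r : R)
    (Sset : {set 'I_K}) :
  #|Sset| = S ->
  (0 < N)%N ->
  (0 < I)%N ->
  1 < M * (K - S)%:R / N%:R ->
  0 < r < 1 ->
  @rate_poly R K S N M r = 0 ->
  forall req : 'I_K -> 'I_N, @request_recoverable R K N I Sset M r req.
Proof.
move=> cS N0 I0 hM /andP[r0 r1] hpoly req k.
rewrite /recoverable /known_symbols /typical_count.
set p := M * r / N%:R.
set q := 1 - p.
set n := (K - S)%N.
have n0 : (0 < n)%N.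
  rewrite lt0n; apply/negP => /eqP nz; move: hM; by rewrite -/n nz mulr0n mulr0 mul0r ltr10.
have hq : q ^+ n = 1 - r.
  have hs : \sum_(i < n) ('C(n, i))%:R * (- (M / N%:R)) ^+ (n - i)
       * r ^+ (n - 1 - i) = -1.
    by move: hpoly; rewrite /rate_poly -/n => /eqP; rewrite addr_eq0 => /eqP.
  rewrite /q addrC exprDn big_ord_recr /= subnn expr0 expr1n mul1r binn addrC.
  congr (_ + _).
  rewrite -[RHS]mulN1r -hs big_distrl /=; apply: eq_bigr => i _.
  rewrite expr1n mulr1 -mulr_natl -!mulrA; congr (_ * _).
  have -> : (n - i = (n - 1 - i).+1)%N by have := ltn_ord i; lia.
  rewrite /p mulrAC -mulNr exprMn exprSr; rewrite -!mulrA; congr (_ * _).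
  by rewrite exprSr.
have pq : p + q = 1 by rewrite /q addrC subrK.
set A := Sset :\ k.
have cnd (P : {set 'I_K}) :
    ~~ ((k \in P) || [exists j in P, j \notin Sset]) = (P \subset A).
  apply/idP/subsetP.
    rewrite negb_or => /andP[kP /exists_inPn H] j jP.
    rewrite !inE (negbNE (H j jP)) andbT.
    by apply: contraNneq kP => <-.
  move=> H; rewrite negb_or; apply/andP; split.
    by apply/negP => kP; have := H k kP; rewrite !inE eqxx.
  apply/exists_inPn => j jP; have := H j jP; rewrite !inE negbK.
  by case/andP.
have tot : \sum_(P : {set 'I_K}) p ^+ #|P| * q ^+ (K - #|P|) = 1.
  have := @sum_sub R K p q [set: 'I_K].
  rewrite pq expr1n mul1r cardsT card_ord subnn expr0 => E.
  rewrite -[X in _ = X]E.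
  by apply: eq_bigl => P; rewrite subsetT.
have part : \sum_(P : {set 'I_K} | (k \in P) || [exists j in P, j \notin Sset])
     p ^+ #|P| * q ^+ (K - #|P|) = 1 - q ^+ (K - #|A|).
  have sub : \sum_(P : {set 'I_K} | ~~ ((k \in P) || [exists j in P, j \notin Sset]))
     p ^+ #|P| * q ^+ (K - #|P|) = q ^+ (K - #|A|).
    have := @sum_sub R K p q A.
    rewrite pq expr1n mul1r => <-.
    by apply: eq_bigl => P; rewrite cnd.
  by rewrite -tot [in RHS](bigID (fun P : {set 'I_K} =>
       (k \in P) || [exists j in P, j \notin Sset])) /= sub addrK.
rewrite -big_distrl /= part.
set m := (K - #|A|)%N.
have nm : (n <= m)%N.
  have : (#|A| <= #|Sset|)%N by apply: subset_leq_card; apply: subD1set.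
  rewrite cS /m /n; lia.
have qle : `|q| <= 1.
  case: (lerP `|q| 1) => // h.
  have : 1 <= `|q| ^+ n by apply: exprn_ege1; apply: ltW.
  by rewrite -normrX hq ger0_norm ?subr_ge0 ?(ltW r1) // => h2; exfalso; move: h2 r0; clear; move=> h2 r0; lra.
have qm : q ^+ m <= 1 - r.
  rewrite -(subnKC nm) exprD hq.
  apply: le_trans (ler_norm _) _.
  rewrite normrM ger0_norm ?subr_ge0 ?(ltW r1) //.
  apply: ler_piMr; first by rewrite subr_ge0 ltW.
  by rewrite normrX; apply: exprn_ile1.
have e : (I%:R : R) = r * (I%:R / r) by rewrite mulrCA mulfV ?mulr1 // gt_eqF.
rewrite {1}e.
apply: ler_wpM2r; first by rewrite divr_ge0 // ltW.
by rewrite lerBrDl -lerBrDr.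
Qed.
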